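(* Let $(S,\Delta,\mathbb{P})$ be a probability space, $(U,d)$ a separable metric space, $\mathfrak{X}$ the set of $U$-valued random variables on $S$, $\mathcal{I}$ an ideal on $\mathbb{N}$, and $\underline{X}=\{X_n\}$, $\underline{Y}=\{Y_n\}$ sequences in $\mathfrak{X}$ that are $\mathcal{I}$-almost surely equal, i.e. $\{n\in\mathbb{N}:\mathbb{P}(X_n=Y_n)=1\}\in\mathcal{F}(\mathcal{I})$. Then for every $r\geq 0$: $\Lambda^{r}_{\underline{X}}(\mathcal{I}^{\mathbb{P}})=\Lambda^{r}_{\underline{Y}}(\mathcal{I}^{\mathbb{P}})$, $\Gamma^{r^s}_{\underline{X}}(\mathcal{I}^{\mathbb{P}})=\Gamma^{r^s}_{\underline{Y}}(\mathcal{I}^{\mathbb{P}})$, and $\Gamma^{r^w}_{\underline{X}}(\mathcal{I}^{\mathbb{P}})=\Gamma^{r^w}_{\underline{Y}}(\mathcal{I}^{\mathbb{P}})$.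
   Context: An ideal on $\mathbb{N}$ is a family $\mathcal{I}\subseteq\mathcal{P}(\mathbb{N})$ with $\varnothing\in\mathcal{I}$, closed under finite unions and under subsets; $\mathcal{F}(\mathcal{I})=\{A\subseteq\mathbb{N}:\mathbb{N}\setminus A\in\mathcal{I}\}$. For a sequence $\underline{X}=\{X_n\}$ in $\mathfrak{X}$ and $r\geq0$: $\Lambda^{r}_{\underline{X}}(\mathcal{I}^{\mathbb{P}})$ is the set of $Y\in\mathfrak{X}$ for which there is $A\subseteq\mathbb{N}$, $A\notin\mathcal{I}$, with $\lim_{n\in A}\mathbb{P}(d(X_n,Y)\geq r+\varepsilon)=0$ for every $\varepsilon>0$ (limit along $A$ in increasing order); $\Gamma^{r^s}_{\underline{X}}(\mathcal{I}^{\mathbb{P}})$ is the set of $Y\in\mathfrak{X}$ with $\{n:\mathbb{P}(d(X_n,Y)<r+\varepsilon)>1-\delta\}\notin\mathcal{I}$ for all $\varepsilon,\delta>0$; $\Gamma^{r^w}_{\underline{X}}(\mathcal{I}^{\mathbb{P}})$ is the set of $Y\in\mathfrak{X}$ for which there is $\delta_*=\delta_*(Y)>0$ with $\{n:\mathbb{P}(d(X_n,Y)<r+\varepsilon)>\delta_*\}\notin\mathcal{I}$ for every $\varepsilon>0$. *)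

(* Defs.v *)
From HB Require Import structures.
From mathcomp Require Import all_boot all_order all_algebra.
From mathcomp Require Import all_classical all_reals all_analysis.
Set Implicit Arguments. Unset Strict Implicit. Unset Printing Implicit Defensive.
Import Order.TTheory GRing.Theory Num.Theory.
Local Open Scope classical_set_scope.
Local Open Scope ring_scope.

Definition is_ideal (I : set (set nat)) : Prop :=
  [/\ I set0,
      (forall A B, I A -> I B -> I (A `|` B)) &
      (forall A B, B `<=` A -> I A -> I B)].

Definition filter_of_ideal (I : set (set nat)) : set (set nat) :=
  [set A | I (~` A)].

Definition is_metric (R : realType) (U : Type) (dist : U -> U -> R) : Prop :=
  [/\ (forall x y, 0 <= dist x y),
      (forall x y, dist x y = 0 <-> x = y),
      (forall x y, dist x y = dist y x) &
      (forall x y z, dist x z <= dist x y + dist y z)].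

Definition mopen (R : realType) (U : Type) (dist : U -> U -> R) (A : set U) :=
  forall x, A x -> exists2 e : R, 0 < e & [set y | dist x y < e] `<=` A.

Definition separable (R : realType) (U : Type) (dist : U -> U -> R) : Prop :=
  exists D : set U, countable D /\
    forall x (e : R), 0 < e -> exists2 y, D y & dist x y < e.

Definition mborel (R : realType) (U : Type) (dist : U -> U -> R) : set (set U) :=
  <<s [set A | mopen dist A] >>.

Definition random_var (dT : measure_display) (T : measurableType dT)
  (R : realType) (U : Type) (dist : U -> U -> R) (X : T -> U) : Prop :=
  forall B, mborel dist B -> measurable (X @^-1` B).

Notation lte := (@Order.lt _ (\bar _)).

Section Sets.
Context (dT : measure_display) (T : measurableType dT) (R : realType)
  (P : probability T R) (U : Type) (dist : U -> U -> R) (I : set (set nat)).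

Definition LambdaP (X : nat -> T -> U) (r : R) : set (T -> U) :=
  [set Y | random_var dist Y /\
     exists A : set nat, ~ I A /\
       forall e : R, 0 < e ->
         (* lim_{n in A} P(d(X_n,Y) >= r+e) = 0 *)
         forall eta : R, 0 < eta -> exists N : nat, forall n, A n -> (N <= n)%N ->
           lte (P [set s | r + e <= dist (X n s) (Y s)]) (eta%:E)].

Definition GammaS (X : nat -> T -> U) (r : R) : set (T -> U) :=
  [set Y | random_var dist Y /\
     forall e delta : R, 0 < e -> 0 < delta ->
       ~ I [set n | lte ((1 - delta)%:E) (P [set s | dist (X n s) (Y s) < r + e])]].

Definition GammaW (X : nat -> T -> U) (r : R) : set (T -> U) :=
  [set Y | random_var dist Y /\
     exists2 delta : R, 0 < delta &
       forall e : R, 0 < e ->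
       ~ I [set n | lte (delta%:E) (P [set s | dist (X n s) (Y s) < r + e])]].

End Sets.

(* Main.v *)
Require Import Defs.
From HB Require Import structures.
From mathcomp Require Import all_boot all_order all_algebra.
From mathcomp Require Import all_classical all_reals all_analysis.
From mathcomp Require Import lra.
Import Order.TTheory GRing.Theory Num.Theory.
Local Open Scope classical_set_scope.
Local Open Scope ring_scope.

Section Aux.
Context (dT : measure_display) (T : measurableType dT) (R : realType)
  (U : Type) (dist : U -> U -> R).

Lemma ball_meas (X : T -> U) (d : U) (q : R) :
  is_metric dist -> random_var dist X -> measurable (X @^-1` [set u | dist d u < q]).
Proof.
move=> [d0 dE dC dT3] rX; apply: rX; apply: sub_gen_smallest => x /= dx.
exists (q - dist d x); first by rewrite subr_gt0.
move=> y /= dxy; apply: (le_lt_trans (dT3 d x y)); by rewrite -ltrBrDl.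
Qed.

Lemma bigcup_countable_meas (V : Type) (D : set V) (F : V -> set T) :
  countable D -> (forall d, D d -> measurable (F d)) ->
  measurable (\bigcup_(d in D) F d).
Proof.
move=> cD mF.
have [->|/set0P[r Dr]] := eqVneq D set0; first by rewrite bigcup_set0.
move/countable_injP: cD => [f injf].
rewrite -(injpinv_image (cst r) injf) bigcup_image.
apply: bigcup_measurable => _ [s Ds <-].
by rewrite pinvKV ?inE//; apply: mF.
Qed.

Lemma dist_lt_meas (X Y : T -> U) (c : R) :
  is_metric dist -> separable dist -> random_var dist X -> random_var dist Y ->
  measurable [set s | dist (X s) (Y s) < c].
Proof.
move=> met [D [cD Dd]] rX rY.
have [d0 dE dC dT3] := met.
rewrite (_ : [set s | _] = \bigcup_(d in D) \bigcup_(pq : rat * rat)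
   (if ratr pq.1 + ratr pq.2 < c then
      X @^-1` [set u | dist d u < ratr pq.1] `&` Y @^-1` [set u | dist d u < ratr pq.2]
    else set0)).
  apply: bigcup_countable_meas => // d Dd'.
  apply: countable_bigcupT_measurable => // -[p q] /=.
  case: ifP => _ //; apply: measurableI; exact: ball_meas.
apply/seteqP; split => s /=.
- move=> hc.
  set a := dist (X s) (Y s).
  have e0 : 0 < (c - a) / 4 by rewrite divr_gt0 // subr_gt0.
  have [d Dd0 ds] := Dd (X s) _ e0.
  have [p] := rat_in_itvoo (eq_ind_r is_true e0 (ltrDl (dist d (X s)) ((c - a) / 4))).
  have [q] := rat_in_itvoo (eq_ind_r is_true e0 (ltrDl (dist d (Y s)) ((c - a) / 4))).
  rewrite !in_itv /= => /andP[q1 q2] /andP[p1 p2].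
  exists d => //; exists (p, q) => //=.
  have t := dT3 d (X s) (Y s).
  have sy := dC (X s) d.
  rewrite ifT; first by split.
  rewrite -/a in t; lra.
- move=> [d Dd0] [[p q] _] /=.
  case: ifP => // hpq [/= h1 h2].
  have t := dT3 (X s) d (Y s).
  have sy := dC (X s) d.
  lra.
Qed.

Lemma eq_meas (X Y : T -> U) :
  is_metric dist -> separable dist -> random_var dist X -> random_var dist Y ->
  measurable [set s | X s = Y s].
Proof.
move=> met sep rX rY; have [d0 dE dC dT3] := met.
suff -> : [set s | X s = Y s] = ~` \bigcup_(q : rat)
   (if 0 < (ratr q : R) then ~` [set s | dist (X s) (Y s) < ratr q] else set0).
  apply: measurableC; apply: bigcupT_measurable_rat => q.
  case: ifP => _ //; apply: measurableC; exact: dist_lt_meas.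
apply/seteqP; split => s /=.
- move=> exy [q _]; case: ifP => // q0 /=; apply.
  by have /dE -> := exy.
- move=> hn; apply: contrapT => nxy; apply: hn.
  have dpos : 0 < dist (X s) (Y s).
    by rewrite lt0r d0 andbT; apply/eqP => /dE.
  have [q] := rat_in_itvoo dpos; rewrite in_itv /= => /andP[q1 q2].
  exists q => //; rewrite q1 /=; apply/negP; rewrite -leNgt; exact: ltW.
Qed.

Lemma P_eq (P : probability T R) (A B E : set T) :
  measurable A -> measurable B -> measurable E -> P E = 1%E ->
  A `&` E = B `&` E -> P A = P B.
Proof.
move=> mA mB mE PE1 AB.
have z C : measurable C -> P (C `\` E) = 0%E.
  move=> mC; apply: (@subset_measure0 _ _ _ P (C `\` E) (~` E)).
  - exact: measurableD.
  - exact: measurableC.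
  - by move=> x [].
  by have := probability_setC P mE; rewrite PE1 subee.
transitivity (P (A `\` E) + P (A `&` E))%E; first exact: measureDI.
transitivity (P (B `\` E) + P (B `&` E))%E; last by apply/esym; exact: measureDI.
by rewrite (z A mA) (z B mB) AB.
Qed.

Lemma incl (P : probability T R) (I : set (set nat)) (X Y : nat -> T -> U)
  (G : set nat) (r : R) :
  is_metric dist -> separable dist -> is_ideal I ->
  (forall n, random_var dist (X n)) -> (forall n, random_var dist (Y n)) ->
  I (~` G) -> (forall n, G n -> P [set s | X n s = Y n s] = 1%E) ->
  [/\ LambdaP P dist I X r `<=` LambdaP P dist I Y r,
      GammaS P dist I X r `<=` GammaS P dist I Y r &
      GammaW P dist I X r `<=` GammaW P dist I Y r].
Proof.
move=> met sep [I0 IU IS] rX rY HG HGE.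
have key n Z c : G n -> random_var dist Z ->
  P [set s | dist (X n s) (Z s) < c] = P [set s | dist (Y n s) (Z s) < c] /\
  P [set s | c <= dist (X n s) (Z s)] = P [set s | c <= dist (Y n s) (Z s)].
  move=> Gn rZ.
  have mE : measurable [set s | X n s = Y n s] by apply: eq_meas.
  have mX : measurable [set s | dist (X n s) (Z s) < c] by apply: dist_lt_meas.
  have mY : measurable [set s | dist (Y n s) (Z s) < c] by apply: dist_lt_meas.
  split.
    eapply P_eq; [exact: mX|exact: mY|exact: mE|exact: (HGE n Gn)|].
    by apply/seteqP; split => s [h e]; split => //; move: h; rewrite /= e.
  have -> : [set s | c <= dist (X n s) (Z s)] = ~` [set s | dist (X n s) (Z s) < c].
    by apply/seteqP; split => s /=; rewrite leNgt => /negP.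
  have -> : [set s | c <= dist (Y n s) (Z s)] = ~` [set s | dist (Y n s) (Z s) < c].
    by apply/seteqP; split => s /=; rewrite leNgt => /negP.
  eapply P_eq; [exact: (measurableC mX)|exact: (measurableC mY)|exact: mE|exact: (HGE n Gn)|].
  by apply/seteqP; split => s [h e]; split => //; move: h; rewrite /= e.
have cover (B C : set nat) : (forall n, B n -> G n -> C n) -> I C -> I B.
  move=> BC IC; apply: (IS _ _ _ (IU _ _ IC HG)) => n Bn.
  by case: (pselect (G n)) => Gn; [left; apply: BC|right].
split.
- move=> Z [rZ [A [nA HA]]]; split => //; exists (A `&` G); split.
    by move=> IAG; apply: nA; apply: (cover _ _ _ IAG) => n An Gn.
  move=> e e0 eta eta0; have [N HN] := HA e e0 eta eta0.
  exists N => n [An Gn] Nn; rewrite -(key n Z _ Gn rZ).2; exact: HN.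
- move=> Z [rZ HS]; split => // e dl e0 d0 IY; apply: (HS e dl e0 d0).
  apply: (cover _ _ _ IY) => n /= h Gn; by rewrite -(key n Z _ Gn rZ).1.
- move=> Z [rZ [dl d0 HW]]; split => //; exists dl => // e e0 IY.
  apply: (HW e e0); apply: (cover _ _ _ IY) => n /= h Gn.
  by rewrite -(key n Z _ Gn rZ).1.
Qed.

End Aux.

Theorem proposition3p7 (dT : measure_display) (T : measurableType dT)
  (R : realType) (P : probability T R) (U : Type) (dist : U -> U -> R)
  (I : set (set nat)) (X Y : nat -> T -> U) :
  is_metric dist -> separable dist -> is_ideal I ->
  (forall n, random_var dist (X n)) -> (forall n, random_var dist (Y n)) ->
  filter_of_ideal I [set n | P [set s | X n s = Y n s] = 1%E] ->
  forall r : R, 0 <= r ->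
    [/\ LambdaP P dist I X r = LambdaP P dist I Y r,
        GammaS P dist I X r = GammaS P dist I Y r &
        GammaW P dist I X r = GammaW P dist I Y r].
Proof.
move=> met sep id rX rY HF r _.
have HGE n : [set n | P [set s | X n s = Y n s] = 1%E] n ->
    P [set s | Y n s = X n s] = 1%E.
  by rewrite /= (_ : [set s | Y n s = X n s] = [set s | X n s = Y n s]) //;
    apply/seteqP; split => s /= ->.
have [a1 a2 a3] := @incl _ _ _ _ _ P I X Y _ r met sep id rX rY HF (fun n h => h).
have [b1 b2 b3] := @incl _ _ _ _ _ P I Y X _ r met sep id rY rX HF HGE.
by split; apply/seteqP; split.
Qed.
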